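(* Let $H$ be a Hilbert space and $U_{ik}\in B(H)$, $i,k=1,\dots,n$, operators satisfying relations (R1)–(R5); put $P_{ik}=U_{ik}^*U_{ik}$ and $Q_{ik}=U_{ik}U_{ik}^*$. Then for all $i,j,k,l$: $P_{ik}P_{il}=0$ and $Q_{ik}Q_{il}=0$ if $k\neq l$; $P_{ik}P_{jk}=0$ and $Q_{ik}Q_{jk}=0$ if $i\neq j$.
   Context: $n\ge2$, $\theta\in M_n(\mathbb R)$ skew-symmetric, $\omega_{ij}=e^{2\pi i\theta_{ij}}$. Relations, for all $i,j,k,l\in\{1,\dots,n\}$: (R1) $U_{ik}U_{jl}+\omega_{ji}U_{jk}U_{il}=\omega_{kl}U_{il}U_{jk}+\omega_{ji}\omega_{kl}U_{jl}U_{ik}$; (R2) $\sum_iU_{ik}U_{il}^*=\delta_{kl}1$; (R3) $\sum_iU_{il}^*U_{ik}=\delta_{kl}1$; (R4) $U_{jk}U_{ik}^*=0$ for $i\neq j$; (R5) $U_{ik}^*U_{jk}=0$ for $i\neq j$. *)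

(* Defs.v *)
From mathcomp Require Import all_boot all_algebra.
From mathcomp Require Import reals trigo.
From mathcomp Require Export complex.
Set Implicit Arguments. Unset Strict Implicit. Unset Printing Implicit Defensive.
Import GRing.Theory Num.Theory.
Local Open Scope ring_scope.

Definition is_inner_product (R : realType) (H : lmodType R[i])
    (ip : H -> H -> R[i]) : Prop :=
  [/\ (forall (a : R[i]) (x y z : H), ip (a *: x + y) z = a * ip x z + ip y z),
      (forall x y : H, ip y x = conjc (ip x y)),
      (forall x : H, 0 <= ip x x) &
      (forall x : H, ip x x = 0 -> x = 0)].

Definition ipnorm (R : realType) (H : lmodType R[i]) (ip : H -> H -> R[i])
  (x : H) : R[i] := sqrtC (ip x x).

Definition ip_complete (R : realType) (H : lmodType R[i])
    (ip : H -> H -> R[i]) : Prop :=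
  forall u : nat -> H,
    (forall e : R, 0 < e -> exists N : nat, forall m k : nat,
        (N <= m)%N -> (N <= k)%N -> ipnorm ip (u m - u k) < (Complex e 0)) ->
    exists l : H, forall e : R, 0 < e -> exists N : nat, forall m : nat,
        (N <= m)%N -> ipnorm ip (u m - l) < (Complex e 0).

Definition is_Hilbert (R : realType) (H : lmodType R[i])
    (ip : H -> H -> R[i]) : Prop :=
  is_inner_product ip /\ ip_complete ip.

Definition bounded_op (R : realType) (H : lmodType R[i])
    (ip : H -> H -> R[i]) (T : H -> H) : Prop :=
  (forall (a : R[i]) (x y : H), T (a *: x + y) = a *: T x + T y) /\
  exists M : R, forall x : H, ipnorm ip (T x) <= (Complex M 0) * ipnorm ip x.

Definition is_adjoint (R : realType) (H : lmodType R[i])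
    (ip : H -> H -> R[i]) (T Ts : H -> H) : Prop :=
  forall x y : H, ip (T x) y = ip x (Ts y).

(* omega_ij = exp(2 pi i theta_ij) *)
Definition omega (R : realType) (n : nat) (theta : 'M[R]_n) (i j : 'I_n)
  : R[i] :=
  Complex (cos (2 * pi * theta i j)) (sin (2 * pi * theta i j)).

(* Main.v *)
Require Import Defs.
From mathcomp Require Import all_boot all_algebra.
From mathcomp Require Import reals trigo.
From mathcomp Require Import complex.
Import GRing.Theory Num.Theory.
Local Open Scope ring_scope.

Lemma op_add (R : realType) (H : lmodType R[i]) (ip : H -> H -> R[i]) (T : H -> H) :
  bounded_op ip T -> forall x y, T (x + y) = T x + T y.
Proof. by case=> L _ x y; rewrite -[x in LHS]scale1r L scale1r. Qed.
Arguments op_add {R H ip T}.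

Lemma op_0 (R : realType) (H : lmodType R[i]) (ip : H -> H -> R[i]) (T : H -> H) :
  bounded_op ip T -> T 0 = 0.
Proof.
move=> B; have := op_add B 0 0; rewrite addr0.
by move/(congr1 (fun z => z - T 0)); rewrite subrr addrK.
Qed.
Arguments op_0 {R H ip T}.

Lemma op_sum (R : realType) (H : lmodType R[i]) (ip : H -> H -> R[i]) (T : H -> H)
  n (g : 'I_n -> H) : bounded_op ip T -> T (\sum_(j < n) g j) = \sum_(j < n) T (g j).
Proof.
move=> B; exact: (big_morph T (op_add B) (op_0 B)).
Qed.
Arguments op_sum {R H ip T n} g.

Theorem corollary3p11 (R : realType) (H : lmodType R[i]) (ip : H -> H -> R[i])
  (n : nat) (theta : 'M[R]_n) (U Us : 'I_n -> 'I_n -> H -> H) :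
  is_Hilbert ip ->
  (1 < n)%N ->
  theta^T = - theta ->
  (forall i k, bounded_op ip (U i k)) ->
  (forall i k, bounded_op ip (Us i k)) ->
  (forall i k, is_adjoint ip (U i k) (Us i k)) ->
  (* (R1) *)
  (forall (i j k l : 'I_n) (x : H),
      U i k (U j l x) + omega theta j i *: U j k (U i l x)
      = omega theta k l *: U i l (U j k x)
        + (omega theta j i * omega theta k l) *: U j l (U i k x)) ->
  (* (R2) *)
  (forall (k l : 'I_n) (x : H),
      \sum_(i < n) U i k (Us i l x) = (if k == l then x else 0)) ->
  (* (R3) *)
  (forall (k l : 'I_n) (x : H),
      \sum_(i < n) Us i l (U i k x) = (if k == l then x else 0)) ->
  (* (R4) *)
  (forall (i j k : 'I_n) (x : H), i != j -> U j k (Us i k x) = 0) ->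
  (* (R5) *)
  (forall (i j k : 'I_n) (x : H), i != j -> Us i k (U j k x) = 0) ->
  let P := fun i k (x : H) => Us i k (U i k x) in
  let Q := fun i k (x : H) => U i k (Us i k x) in
  (forall (i k l : 'I_n) (x : H), k != l ->
      P i k (P i l x) = 0 /\ Q i k (Q i l x) = 0) /\
  (forall (i j k : 'I_n) (x : H), i != j ->
      P i k (P j k x) = 0 /\ Q i k (Q j k x) = 0).
Proof.
move=> _ _ _ BU BUs _ _ R2 R3 R4 R5 P Q; split.
- move=> i k l x kl; rewrite /P /Q; split.
  + have := R2 k l (U i l x); rewrite (negbTE kl) => /(congr1 (Us i k)) E.
    rewrite -[RHS](op_0 (BUs i k)) -E (op_sum _ (BUs i k)) (bigD1 i) // big1 => [|j ji]; first exact/esym/addr0.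
    by apply: R5; rewrite eq_sym.
  + have := R3 l k (Us i l x); rewrite eq_sym (negbTE kl) => /(congr1 (U i k)) E.
    rewrite -[RHS](op_0 (BU i k)) -E (op_sum _ (BU i k)) (bigD1 i) // big1 => [|j ji]; first exact/esym/addr0.
    by apply: R4.
- move=> i j k x ij; rewrite /P /Q; split.
  + have ji : j != i by rewrite eq_sym.
    by rewrite (R4 j i k _ ji) (op_0 (BUs i k)).
  + by rewrite (R5 i j k _ ij) (op_0 (BU i k)).
Qed.
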